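(* Let $a\geq 1$ and $b\geq 2$ be integers. For Lebesgue-almost every $x\in cA$ there exists $k\geq 0$ such that $T_{a,b}^k(x)\in\Theta$.
   Context: For $n\geq 1$ let $\Lambda^n=\{x\in\mathbb{R}^n : 0\leq x_1\leq\cdots\leq x_n\}$. For integers $a,b\geq 1$ the map $T_{a,b}:\Lambda^{a+b}\to\Lambda^{a+b}$ sends $x$ to the vector obtained by arranging $x_1,\ldots,x_a,\,x_{a+1}-x_a,\ldots,x_{a+b}-x_a$ in nondecreasing order. Let $\sigma(x)=x_1+\cdots+x_{a+b}$, $cA=\{x\in\Lambda^{a+b}: \sigma(x)>b\,x_{a+b}\}$ and $\Theta=\{x\in cA : 2x_a\geq x_{a+b}\}$. *)

(* Defs.v *)
From mathcomp Require Import all_boot all_order all_algebra.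
From mathcomp Require Import reals.
Set Implicit Arguments. Unset Strict Implicit. Unset Printing Implicit Defensive.
Import Order.TTheory GRing.Theory Num.Theory.
Local Open Scope ring_scope.

Section Defs.
Variable R : realType.

(* 1-indexed coordinate: xc x k = x_k for 1 <= k <= n (0 otherwise). *)
Definition xc (n : nat) (x : 'I_n -> R) (k : nat) : R :=
  if insub k.-1 is Some i then x i else 0.

Definition Lam (n : nat) (x : 'I_n -> R) : Prop :=
  0 <= xc x 1 /\ forall k : nat, (1 <= k)%N -> (k < n)%N -> xc x k <= xc x k.+1.

Definition sigma (n : nat) (x : 'I_n -> R) : R := \sum_(i < n) x i.

Definition Tvals (a b : nat) (x : 'I_(a + b) -> R) : seq R :=
  [seq xc x k | k <- iota 1 a] ++ [seq xc x k - xc x a | k <- iota a.+1 b].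

Definition T (a b : nat) (x : 'I_(a + b) -> R) : 'I_(a + b) -> R :=
  fun i => nth 0 (sort <=%R (Tvals x)) i.

Definition cA (a b : nat) (x : 'I_(a + b) -> R) : Prop :=
  Lam x /\ b%:R * xc x (a + b) < sigma x.

Definition Theta (a b : nat) (x : 'I_(a + b) -> R) : Prop :=
  cA x /\ xc x (a + b) <= 2 * xc x a.

Definition lebesgue_null (n : nat) (N : ('I_n -> R) -> Prop) : Prop :=
  forall eps : R, 0 < eps ->
  exists lo hi : nat -> 'I_n -> R,
    (forall k i, lo k i <= hi k i) /\
    (forall x, N x -> exists k, forall i, lo k i <= x i <= hi k i) /\
    (forall m, \sum_(k < m) \prod_(i < n) (hi k i - lo k i) <= eps).
End Defs.

(* Main.v *)
Require Import Defs.
From mathcomp Require Import all_boot all_order all_algebra.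
From mathcomp Require Import reals.
From mathcomp Require Import lra.
Import Order.TTheory GRing.Theory Num.Theory.
Local Open Scope ring_scope.

Section Aux.
Variable R : realType.
Variables a b : nat.
Notation n := (a + b)%N.

Lemma xc_ord (m : nat) (y : 'I_m -> R) (i : 'I_m) : xc y (val i).+1 = y i.
Proof.
rewrite /xc /=; case: insubP => [j _ /val_inj -> //|]; by rewrite ltn_ord.
Qed.

Lemma sigma_xc (m : nat) (y : 'I_m -> R) : sigma y = \sum_(1 <= k < m.+1) xc y k.
Proof.
rewrite /sigma big_add1 /= big_mkord; apply: eq_bigr => i _; by rewrite xc_ord.
Qed.

Lemma Lam_mono {m : nat} {y : 'I_m -> R} : Lam y ->
  forall i j, (1 <= i)%N -> (i <= j)%N -> (j <= m)%N -> xc y i <= xc y j.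
Proof.
move=> [_ H] i j hi; elim: j => [|j IH]; first by rewrite leqn0 => /eqP ->.
rewrite leq_eqVlt => /orP [/eqP -> //|hij] hj.
have h1 : (1 <= j)%N by exact: leq_trans hi hij.
exact: (le_trans (IH hij (ltnW hj)) (H j h1 hj)).
Qed.

Lemma Lam_ge0 {m : nat} {y : 'I_m -> R} : Lam y -> forall k, 0 <= xc y k.
Proof.
move=> hL k; case: k => [|k]; first by case: hL.
case: (leqP k.+1 m) => hk.
  have h0 : 0 <= xc y 1 by case: hL.
  exact: (le_trans h0 (Lam_mono hL 1 k.+1 (leqnn 1) (ltn0Sn k) hk)).
by rewrite /xc /= insubN // -leqNgt.
Qed.

Definition sT (x : 'I_n -> R) := sort <=%R (Tvals x).

Lemma size_Tvals (x : 'I_n -> R) : size (Tvals x) = n.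
Proof. by rewrite /Tvals size_cat !size_map !size_iota. Qed.

Lemma size_sT x : size (sT x) = n.
Proof. by rewrite /sT size_sort size_Tvals. Qed.

Lemma xc_T {x : 'I_n -> R} k : xc (T x) k = nth 0 (sT x) k.-1.
Proof.
rewrite /xc; case: insubP => [i _ <-|] //.
by rewrite -leqNgt => h; rewrite nth_default // size_sT.
Qed.

Lemma sigma_T (x : 'I_n -> R) :
  sigma (T x) = sigma x - b%:R * xc x a.
Proof.
have -> : sigma (T x) = \sum_(v <- sT x) v.
  by rewrite /sigma (big_nth 0) size_sT big_mkord.
rewrite /sT (perm_big _ (permEl (perm_sort _ _))).
have -> : \sum_(v <- Tvals x) v = \sum_(k <- iota 1 a) xc x k +
   \sum_(k <- iota a.+1 b) (xc x k - xc x a).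
  by rewrite /Tvals big_cat !big_map.
rewrite sigma_xc (big_cat_nat _ (n:=a.+1)) //; last by rewrite ltnS leq_addr.
rewrite sumrB.
have -> : \sum_(k <- iota a.+1 b) xc x a = b%:R * xc x a.
  rewrite big_const_seq count_predT size_iota mulr_natl.
  move: (xc x a) => c; elim: b {x} => [|m IH] //=; by rewrite IH mulrS.
have -> : \sum_(1 <= k < a.+1) xc x k = \sum_(k <- iota 1 a) xc x k.
  by rewrite /index_iota subn1.
have -> : \sum_(a.+1 <= k < n.+1) xc x k = \sum_(k <- iota a.+1 b) xc x k.
  by rewrite /index_iota subSS addKn.
by rewrite addrA.
Qed.

Lemma nth_P (P : R -> Prop) (s : seq R) i :
  P 0 -> (forall v, v \in s -> P v) -> P (nth 0 s i).
Proof.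
move=> P0 H; case: (ltnP i (size s)) => h; first by apply/H/mem_nth.
by rewrite nth_default.
Qed.

Lemma mem_Tvals (x : 'I_n -> R) v : v \in Tvals x ->
  (exists2 k, (1 <= k <= a)%N & v = xc x k) \/
  (exists2 k, (a < k <= n)%N & v = xc x k - xc x a).
Proof.
rewrite mem_cat => /orP [/mapP [k hk ->]|/mapP [k hk ->]]; [left|right]; exists k => //.
  by move: hk; rewrite mem_iota add1n ltnS.
by move: hk; rewrite mem_iota addSn ltnS.
Qed.

Lemma Tvals_ge0 (x : 'I_n -> R) : (1 <= a)%N -> Lam x -> forall v, v \in Tvals x -> 0 <= v.
Proof.
move=> ha hL v /mem_Tvals [[k hk ->]|[k /andP [h1 h2] ->]]; first exact: Lam_ge0.
by rewrite subr_ge0; apply: (Lam_mono hL a k ha (ltnW h1) h2).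
Qed.

Lemma Lam_T (x : 'I_n -> R) : (1 <= a)%N -> Lam x -> Lam (T x).
Proof.
move=> ha hL; split.
  rewrite xc_T; apply: (nth_P (fun v => 0 <= v)) => //; move=> v; rewrite mem_sort.
  exact: (@Tvals_ge0 x ha hL v).
move=> k h1 h2; rewrite !xc_T.
have hs := sort_sorted (@le_total _ R) (Tvals x).
rewrite /=; apply: (sorted_leq_nth le_trans le_refl 0 hs).
- by rewrite inE size_sT; case: k h1 h2 => // k _ /ltnW.
- by rewrite inE size_sT.
- by case: k h1 h2.
Qed.

Lemma Tvals_le (x : 'I_n -> R) : Lam x -> 2 * xc x a < xc x n ->
  forall v, v \in Tvals x -> v <= xc x n - xc x a.
Proof.
move=> hL hlt v /mem_Tvals [[k /andP [h1 h2] ->]|[k /andP [h1 h2] ->]].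
  have := Lam_mono hL k a h1 h2 (leq_addr _ _).
  have := Lam_ge0 hL a.
  lra.
by rewrite lerD2r; apply: (Lam_mono hL k n (leq_trans (ltn0Sn a) h1) h2 (leqnn n)).
Qed.

Lemma max_T (x : 'I_n -> R) : Lam x -> 2 * xc x a < xc x n ->
  xc (T x) n <= xc x n - xc x a.
Proof.
move=> hL hlt; rewrite xc_T; apply: (nth_P (fun v => v <= xc x n - xc x a)); last by move=> v; rewrite mem_sort; exact: (@Tvals_le x hL hlt v).
have := Lam_ge0 hL a; lra.
Qed.

Lemma sigma_le (x : 'I_n -> R) : (1 <= a)%N -> Lam x ->
  sigma x <= a%:R * xc x a + b%:R * xc x n.
Proof.
move=> ha hL; rewrite sigma_xc (big_cat_nat _ (n:=a.+1)) //; last by rewrite ltnS leq_addr.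
apply: lerD.
  apply: le_trans (ler_sum_nat (G := fun _ => xc x a) _) _.
    by move=> i /andP [h1 h2]; apply: (Lam_mono hL i a h1 h2 (leq_addr _ _)).
  by rewrite sumr_const_nat subn1 /= mulr_natl.
apply: le_trans (ler_sum_nat (G := fun _ => xc x n) _) _.
  by move=> i /andP [h1 h2]; apply: (Lam_mono hL i n (leq_trans (ltn0Sn a) h1) h2 (leqnn n)).
by rewrite sumr_const_nat subSS addKn mulr_natl.
Qed.

Definition dl (x : 'I_n -> R) := sigma x - b%:R * xc x n.

Lemma step (x : 'I_n -> R) : (1 <= a)%N -> cA x -> ~ Theta x ->
  [/\ cA (T x), dl x <= dl (T x) &
      a%:R * sigma (T x) + b%:R * dl x <= a%:R * sigma x].
Proof.
move=> ha [hL hs] hT.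
have hlt : 2 * xc x a < xc x n.
  rewrite ltNge; apply/negP => h; apply: hT; split => //.
have hM := max_T x hL hlt.
have hS := sigma_T x.
have hu := sigma_le x ha hL.
have hb0 : 0 <= b%:R :> R by [].
have ha0 : 0 <= a%:R :> R by [].
have hbM : b%:R * xc (T x) n <= b%:R * (xc x n - xc x a) by apply: ler_wpM2l.
rewrite /dl; split.
- split; first exact: (Lam_T x ha hL).
  rewrite hS; nra.
- rewrite hS; nra.
- rewrite hS; nra.
Qed.

End Aux.
Arguments dl {R a b}.
Arguments step {R a b}.
Arguments Lam_ge0 {R m y}.

Theorem lemma5p2 (R : realType) (a b : nat) (ha : (1 <= a)%N) (hb : (2 <= b)%N) :
  lebesgue_null
    (fun x : 'I_(a + b) -> R =>
       cA x /\ forall k : nat, ~ Theta (iter k (@T R a b) x)).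
Proof.
move=> eps heps.
exists (fun _ _ => 0), (fun _ _ => 0); split; first by [].
split; last first.
  move=> m; rewrite big1; first exact: ltW.
  move=> k _; rewrite subrr prodr_const card_ord expr0n.
  by case: a ha.
move=> x [hcA hT]; exfalso.
set y := fun k => iter k (@T R a b) x.
set d0 := dl x.
have hd0 : 0 < d0 by case: hcA => _ h; rewrite /d0 /dl subr_gt0.
have hb0 : 0 < b%:R :> R by rewrite ltr0n (leq_trans _ hb).
have ha0 : 0 <= a%:R :> R by [].
have claim : forall k, [/\ cA (y k), d0 <= dl (y k) &
    a%:R * sigma (y k) + k%:R * (b%:R * d0) <= a%:R * sigma x].
  elim => [|k [hc hd hs]]; first by rewrite /y /= mul0r addr0.
  have [hc' hd' hs'] := step (y k) ha hc (hT k).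
  have e : y k.+1 = T (y k) by rewrite /y iterS.
  rewrite e; split => //; first exact: le_trans hd hd'.
  have : b%:R * d0 <= b%:R * dl (y k) by apply: ler_wpM2l => //; exact: ltW.
  rewrite -natr1; nra.
have hsx : 0 <= a%:R * sigma x.
  have [[hL hs] _ _] := claim 0%N.
  have := Lam_ge0 hL (a + b)%N.
  rewrite /y /= in hs * => hn.
  apply: mulr_ge0 => //; apply: le_trans (ltW hs); apply: mulr_ge0 => //; exact: ltW.
have hc : 0 < b%:R * d0 by apply: mulr_gt0.
have hge : 0 <= a%:R * sigma x / (b%:R * d0) by apply: divr_ge0 => //; exact: ltW.
have := archi_boundP hge; rewrite ltr_pdivrMr //.
set k := Num.Def.archi_bound _ => hk.
have [[hL hs] _ hsk] := claim k.
have hn := Lam_ge0 hL (a + b)%N.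
have : 0 <= a%:R * sigma (y k).
  apply: mulr_ge0 => //; apply: le_trans (ltW hs); apply: mulr_ge0 => //; exact: ltW.
lra.
Qed.
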